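(* Let $\mathcal{N}$ be a sum-network over a finite field $F$ with $m$ sources and $n$ terminals, where $\min\{m,n\}=3$, and such that $\text{min-cut}(s_i-t_j)\ge 1$ for every source $s_i$ and terminal $t_j$ (i.e., every terminal is reachable from every source). Then the linear coding capacity of $\mathcal{N}$ is at least $2/3$.
   Context: A sum-network is a finite directed acyclic multigraph with distinguished source nodes $s_1,\dots,s_m$ and terminal nodes $t_1,\dots,t_n$; each edge carries one alphabet symbol per use. A $(k,l)$ fractional network code over $F$: each source $s_i$ holds $X_i\in F^k$ and sends on each outgoing edge a function $F^k\to F^l$ of $X_i$; each edge whose tail $v$ is not a source carries a function $F^{l|In(v)|}\to F^l$ of the vectors on the incoming edges of $v$; each terminal applies a decoding function $F^{l|In(t)|}\to F^k$. It is a solution if every terminal outputs $X_1+\cdots+X_m$ for all messages. The code is linear if all these functions are $F$-linear. The linear coding capacity is the supremum of $k/l$ over all linear $(k,l)$ fractional solutions. $\text{min-cut}(s_i-t_j)$ is the minimum number of edges whose removal disconnects $t_j$ from $s_i$. *)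

(* Defs.v *)
From HB Require Import structures.
From mathcomp Require Import all_boot all_order all_algebra.
Set Implicit Arguments. Unset Strict Implicit. Unset Printing Implicit Defensive.
Import Order.TTheory GRing.Theory Num.Theory.
Local Open Scope ring_scope.

Definition adj (V E : finType) (tail head : E -> V) : rel V :=
  fun u v => [exists e : E, (tail e == u) && (head e == v)].

Definition acyclic (V E : finType) (tail head : E -> V) : Prop :=
  forall e : E, ~~ connect (adj tail head) (head e) (tail e).

Record sum_network (m n : nat) := SumNetwork {
  sn_V : finType;
  sn_E : finType;
  sn_tail : sn_E -> sn_V;
  sn_head : sn_E -> sn_V;
  sn_src : 'I_m -> sn_V;
  sn_term : 'I_n -> sn_V;
  sn_acyclic : acyclic sn_tail sn_head;
  sn_src_inj : injective sn_src;
  sn_term_inj : injective sn_term;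
  sn_src_noin : forall (e : sn_E) (i : 'I_m), sn_head e != sn_src i;
  sn_term_noout : forall (e : sn_E) (j : 'I_n), sn_tail e != sn_term j
}.

Definition sn_adj m n (N : sum_network m n) : rel (sn_V N) :=
  adj (@sn_tail m n N) (@sn_head m n N).

(* A (k,l) linear fractional network code over F (row-vector convention:
   a linear map F^a -> F^b is x |-> x *m M with M : 'M_(a,b); a linear map
   on the concatenation of the incoming vectors is a sum of blocks). *)
Record lin_code (F : fieldType) m n (N : sum_network m n) (k l : nat) :=
  LinCode {
  lc_src : sn_E N -> 'M[F]_(k, l);            (* used on edges out of sources *)
  lc_mid : sn_E N -> sn_E N -> 'M[F]_(l, l);   (* lc_mid e' e : block from in-edge e' to e *)
  lc_dec : 'I_n -> sn_E N -> 'M[F]_(l, k)      (* decoding block at terminal j for in-edge e' *)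
}.

Definition consistent (F : fieldType) m n (N : sum_network m n) k l
  (C : lin_code F N k l) (X : 'I_m -> 'rV[F]_k) (y : sn_E N -> 'rV[F]_l) : Prop :=
  forall e : sn_E N,
    (forall i : 'I_m, sn_tail e = sn_src N i -> y e = X i *m lc_src C e) /\
    ((forall i : 'I_m, sn_tail e != sn_src N i) ->
       y e = \sum_(e' : sn_E N | sn_head e' == sn_tail e) y e' *m lc_mid C e' e).

Definition terminal_output (F : fieldType) m n (N : sum_network m n) k l
  (C : lin_code F N k l) (y : sn_E N -> 'rV[F]_l) (j : 'I_n) : 'rV[F]_k :=
  \sum_(e' : sn_E N | sn_head e' == sn_term N j) y e' *m lc_dec C j e'.

Definition is_solution (F : fieldType) m n (N : sum_network m n) k l
  (C : lin_code F N k l) : Prop :=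
  forall (X : 'I_m -> 'rV[F]_k) (y : sn_E N -> 'rV[F]_l),
    consistent C X y -> forall j : 'I_n, terminal_output C y j = \sum_(i < m) X i.

(* "linear coding capacity >= r": the supremum of k/l over linear (k,l)
   fractional solutions (k, l >= 1) is at least r. *)
Definition linear_capacity_ge (F : fieldType) m n (N : sum_network m n) (r : rat)
  : Prop :=
  forall q : rat, q < r ->
    exists (k l : nat) (C : lin_code F N k l),
      [/\ (0 < k)%N, (0 < l)%N, is_solution C & q < k%:R / l%:R].
Arguments sn_adj {m n} N.
Arguments sn_src {m n} s _.
Arguments sn_term {m n} s _.

(* Main.v *)
Require Import Defs.
From HB Require Import structures.
From mathcomp Require Import all_boot all_order all_algebra.
From mathcomp Require Import zify.
Set Implicit Arguments. Unset Strict Implicit. Unset Printing Implicit Defensive.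
Import Order.TTheory GRing.Theory Num.Theory.
Local Open Scope ring_scope.

Definition Aa (p : nat) (q : 'I_3) (r : 'I_2) : nat := ((q == p :> nat) && (r == 0%N :> nat)).
Definition Bb (p : nat) (q : 'I_3) (r : 'I_2) : nat := ((q == p :> nat) && (r == 1%N :> nat)).

Definition tab (b0 b1 b2 : bool) (c : 'I_3) (q : 'I_3) (r : 'I_2) : nat :=
  match b0, b1, b2, val c with
  | true, false, false, 0 => Aa 0 q r
  | true, false, false, 1 => Bb 0 q r
  | false, true, false, 0 => Aa 1 q r
  | false, true, false, 1 => Bb 1 q r
  | false, false, true, 0 => Aa 2 q r
  | false, false, true, 1 => Bb 2 q r
  | true, true, false, 0 => Aa 0 q r + Aa 1 q r
  | true, true, false, 1 => Bb 0 q r + Bb 1 q r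
  | true, true, false, 2 => Aa 0 q r
  | true, false, true, 0 => Aa 0 q r + Aa 2 q r
  | true, false, true, 1 => Bb 0 q r + Bb 2 q r
  | true, false, true, 2 => Bb 0 q r
  | false, true, true, 0 => Aa 1 q r + Aa 2 q r
  | false, true, true, 1 => Bb 1 q r + Bb 2 q r
  | false, true, true, 2 => Aa 1 q r + Bb 1 q r
  | true, true, true, 0 => Aa 0 q r + Aa 1 q r + Aa 2 q r
  | true, true, true, 1 => Bb 0 q r + Bb 1 q r + Bb 2 q r
  | _, _, _, _ => 0
  end%N.

Definition i0 : 'I_3 := @Ordinal 3 0 isT.
Definition i1 : 'I_3 := @Ordinal 3 1 isT.
Definition i2 : 'I_3 := @Ordinal 3 2 isT.

Section Core.
Variable F : fieldType.

Definition fn (T : {set 'I_3}) (c q : 'I_3) (r : 'I_2) : nat :=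
  tab (i0 \in T) (i1 \in T) (i2 \in T) c q r.

Definition G (T : {set 'I_3}) (p : 'I_3) : 'M[F]_(2,3) :=
  \matrix_(r, c) (fn T c p r)%:R.

Lemma G_out (T : {set 'I_3}) (p : 'I_3) : p \notin T -> G T p = 0.
Proof.
move=> pT; apply/matrixP=> r c; rewrite !mxE /fn.
case: p pT => [[|[|[|//]]] Hp] pT.
- have -> : i0 \in T = false by apply/negbTE; rewrite (_ : i0 = Ordinal Hp) //; exact: val_inj.
  by case: (i1 \in T); case: (i2 \in T); case: c => [[|[|[|?]]] ?].
- have -> : i1 \in T = false by apply/negbTE; rewrite (_ : i1 = Ordinal Hp) //; exact: val_inj.
  by case: (i0 \in T); case: (i2 \in T); case: c => [[|[|[|?]]] ?]; case: r => [[|[|?]] ?].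
- have -> : i2 \in T = false by apply/negbTE; rewrite (_ : i2 = Ordinal Hp) //; exact: val_inj.
  by case: (i0 \in T); case: (i1 \in T); case: c => [[|[|[|?]]] ?]; case: r => [[|[|?]] ?].
Qed.

Variables (I : finType) (P : pred I) (f : I -> {set 'I_3}).

Definition inU (t : 'I_3 -> 'I_2 -> nat) := exists cf : I -> 'cV[F]_3,
  forall q r, (t q r)%:R = (\sum_(i | P i) G (f i) q *m cf i) r 0.

Lemma inU0 : inU (fun _ _ => 0%N).
Proof. exists (fun _ => 0) => q r; rewrite big1 ?mxE // => i _; by rewrite mulmx0. Qed.

Lemma inU_comb t t1 t2 t3 t4 t5 : inU t1 -> inU t2 -> inU t3 -> inU t4 -> inU t5 ->
  (forall q r, t q r + t4 q r + t5 q r = t1 q r + t2 q r + t3 q r)%N -> inU t.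
Proof.
move=> [c1 H1] [c2 H2] [c3 H3] [c4 H4] [c5 H5] E.
exists (fun i => c1 i + c2 i + c3 i - c4 i - c5 i) => q r.
have : (t q r)%:R = (t1 q r)%:R + (t2 q r)%:R + (t3 q r)%:R - (t4 q r)%:R - (t5 q r)%:R :> F.
  by apply/eqP; rewrite eq_sym !subr_eq -!natrD; apply/eqP; congr (_%:R); move: (E q r); lia.
move=> ->; rewrite H1 H2 H3 H4 H5 !summxE -!big_split /= -!sumrB; apply: eq_bigr => i _.
by rewrite !mulmxDr !mulmxN !mxE.
Qed.

Lemma inU_gen i c : P i -> inU (fn (f i) c).
Proof.
move=> Pi; exists (fun j => if j == i then delta_mx c 0 else 0) => q r.
rewrite (bigD1 i) //= eqxx big1 ?addr0.
  by rewrite mxE (bigD1 c) //= big1 ?addr0 ?mxE ?eqxx ?mulr1 // => k /negbTE kc; rewrite !mxE kc mulr0.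
by move=> j /andP[_ /negbTE ->]; rewrite mulmx0.
Qed.

Definition hasb b0 b1 b2 := forall c, inU (tab b0 b1 b2 c).

End Core.

Ltac side := let q := fresh in let r := fresh in
  move=> q r; case: q => [[|[|[|?]]] ?]; case: r => [[|[|?]] ?]; reflexivity.
Ltac solve_u H1 H2 := first [solve [apply: (inU_comb (H1 i0) (H1 i0) (inU0 _ _ _) (inU0 _ _ _) (inU0 _ _ _)); side] | solve [apply: (inU_comb (H1 i0) (H1 i1) (inU0 _ _ _) (inU0 _ _ _) (inU0 _ _ _)); side] | solve [apply: (inU_comb (H1 i0) (H1 i2) (inU0 _ _ _) (inU0 _ _ _) (inU0 _ _ _)); side] | solve [apply: (inU_comb (H1 i0) (H2 i0) (inU0 _ _ _) (inU0 _ _ _) (inU0 _ _ _)); side] | solve [apply: (inU_comb (H1 i0) (H2 i1) (inU0 _ _ _) (inU0 _ _ _) (inU0 _ _ _)); side] | solve [apply: (inU_comb (H1 i0) (H2 i2) (inU0 _ _ _) (inU0 _ _ _) (inU0 _ _ _)); side] | solve [apply: (inU_comb (H1 i0) (inU0 _ _ _) (inU0 _ _ _) (inU0 _ _ _) (inU0 _ _ _)); side] | solve [apply: (inU_comb (H1 i1) (H1 i1) (inU0 _ _ _) (inU0 _ _ _) (inU0 _ _ _)); side] | solve [apply: (inU_comb (H1 i1) (H1 i2) (inU0 _ _ _) (inU0 _ _ _) (inU0 _ _ _)); side] | solve [apply: (inU_comb (H1 i1) (H2 i0) (inU0 _ _ _) (inU0 _ _ _) (inU0 _ _ _)); side] |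 solve [apply: (inU_comb (H1 i1) (H2 i1) (inU0 _ _ _) (inU0 _ _ _) (inU0 _ _ _)); side] | solve [apply: (inU_comb (H1 i1) (H2 i2) (inU0 _ _ _) (inU0 _ _ _) (inU0 _ _ _)); side] | solve [apply: (inU_comb (H1 i1) (inU0 _ _ _) (inU0 _ _ _) (inU0 _ _ _) (inU0 _ _ _)); side] | solve [apply: (inU_comb (H1 i2) (H1 i2) (inU0 _ _ _) (inU0 _ _ _) (inU0 _ _ _)); side] | solve [apply: (inU_comb (H1 i2) (H2 i0) (inU0 _ _ _) (inU0 _ _ _) (inU0 _ _ _)); side] | solve [apply: (inU_comb (H1 i2) (H2 i1) (inU0 _ _ _) (inU0 _ _ _) (inU0 _ _ _)); side] | solve [apply: (inU_comb (H1 i2) (H2 i2) (inU0 _ _ _) (inU0 _ _ _) (inU0 _ _ _)); side] | solve [apply: (inU_comb (H1 i2) (inU0 _ _ _) (inU0 _ _ _) (inU0 _ _ _) (inU0 _ _ _)); side] | solve [apply: (inU_comb (H2 i0) (H2 i0) (inU0 _ _ _) (inU0 _ _ _) (inU0 _ _ _)); side] | solve [apply: (inU_comb (H2 i0) (H2 i1) (inU0 _ _ _) (inU0 _ _ _) (inU0 _ _ _)); side] | solve [apply: (inU_comb (H2 i0) (H2 i2) (inU0 _ _ _) (inU0 _ _ _) (inU0 _ _ _)); side] | solve [apply: (inU_comb (H2 i0) (inU0 _ _ _) (inU0 _ _ _) (inU0 _ _ _) (inU0 _ _ _)); side] | solve [apply: (inU_comb (H2 i1) (H2 i1) (inU0 _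 _ _) (inU0 _ _ _) (inU0 _ _ _)); side] | solve [apply: (inU_comb (H2 i1) (H2 i2) (inU0 _ _ _) (inU0 _ _ _) (inU0 _ _ _)); side] | solve [apply: (inU_comb (H2 i1) (inU0 _ _ _) (inU0 _ _ _) (inU0 _ _ _) (inU0 _ _ _)); side] | solve [apply: (inU_comb (H2 i2) (H2 i2) (inU0 _ _ _) (inU0 _ _ _) (inU0 _ _ _)); side] | solve [apply: (inU_comb (H2 i2) (inU0 _ _ _) (inU0 _ _ _) (inU0 _ _ _) (inU0 _ _ _)); side] | solve [apply: (inU_comb (inU0 _ _ _) (inU0 _ _ _) (inU0 _ _ _) (inU0 _ _ _) (inU0 _ _ _)); side] | solve [apply: (inU_comb (H1 i1) (H2 i1) (H1 i0) (H2 i2) (H1 i2)); side] | solve [apply: (inU_comb (H1 i0) (H2 i2) (H1 i1) (H2 i1) (H1 i2)); side] | solve [apply: (inU_comb (H1 i0) (H2 i0) (inU0 _ _ _) (H1 i2) (inU0 _ _ _)); side] | solve [apply: (inU_comb (H1 i1) (H2 i1) (inU0 _ _ _) (H2 i2) (inU0 _ _ _)); side] | solve [apply: (inU_comb (H2 i1) (H1 i1) (H2 i0) (H1 i2) (H2 i2)); side] | solve [apply: (inU_comb (H2 i0) (H1 i2) (H2 i1) (H1 i1) (H2 i2)); side] | solve [apply: (inU_comb (H2 i0) (H1 i0) (inU0 _ _ _) (H2 i2) (inU0 _ _ _)); side] | solve [apply: (inU_comb (H2 i1) (H1 i1) (inU0 _ _ _) (H1 i2) (inU0 _ _ _)); 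side]].

Section Union.
Variables (F : fieldType) (I : finType) (P : pred I) (f : I -> {set 'I_3}).
Lemma hasb_union b0 b1 b2 b0' b1' b2' : hasb F P f b0 b1 b2 -> hasb F P f b0' b1' b2' ->
  hasb F P f (b0 || b0') (b1 || b1') (b2 || b2').
Proof.
move=> H1 H2.
case: b0 H1; case: b1; case: b2; case: b0' H2; case: b1'; case: b2' => H2 H1 /=;
  try exact H1; try exact H2;
  move=> [[|[|[|?]]] Hc]; try solve [solve_u H1 H2].
Qed.
End Union.

Section Cover.
Variables (F : fieldType) (I : finType) (P : pred I) (f : I -> {set 'I_3}).

Definition hasU (T : {set 'I_3}) := hasb F P f (i0 \in T) (i1 \in T) (i2 \in T).

Lemma has_bigcup : hasU (\bigcup_(i | P i) f i).
Proof.
apply: (big_ind hasU).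
- rewrite /hasU !inE => c.
  apply: (inU_comb (inU0 _ _ _) (inU0 _ _ _) (inU0 _ _ _) (inU0 _ _ _) (inU0 _ _ _)).
  by case: c => [[|[|[|?]]] ?]; side.
- by move=> A B HA HB; rewrite /hasU !in_setU; exact: hasb_union.
- by move=> i Pi c; exact: inU_gen.
Qed.

Lemma cover_mid : exists B : I -> 'M[F]_3, forall p,
  G F (\bigcup_(i | P i) f i) p = \sum_(i | P i) G F (f i) p *m B i.
Proof.
have [cfs Hc] := fin_all_exists has_bigcup.
exists (fun i => \matrix_(k, c) cfs c i k 0) => p.
apply/matrixP => r c; rewrite mxE -/(fn _ _ _ _) Hc !summxE; apply: eq_bigr => i _.
by rewrite !mxE; apply: eq_bigr => k _; rewrite !mxE.
Qed.

Lemma cover_dec : \bigcup_(i | P i) f i = setT -> exists D : I -> 'M[F]_(3,2), forall p,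
  \sum_(i | P i) G F (f i) p *m D i = 1%:M.
Proof.
move=> HS; have H := has_bigcup; rewrite /hasU HS !inE in H.
have [cf0 H0] := H i0; have [cf1 H1] := H i1.
exists (fun i => \matrix_(k, s) (if s == 0 :> nat then cf0 i k 0 else cf1 i k 0)) => p.
apply/matrixP => r s; rewrite summxE.
case: s => [[|[|//]] Hs].
- have := H0 p r; rewrite summxE => E.
  rewrite !mxE /=.
  have -> : (r == Ordinal Hs) = (r == 0 :> nat) by [].
  have T0 : forall q (r : 'I_2), (r == 0 :> nat)%:R = (tab true true true i0 q r)%:R :> F.
    by move=> [[|[|[|?]]] ?] [[|[|?]] ?].
  rewrite (T0 p).
  rewrite E; apply: eq_bigr => i _; rewrite !mxE; apply: eq_bigr => k _; rewrite !mxE //.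
- have := H1 p r; rewrite summxE => E.
  rewrite !mxE /=.
  have -> : (r == Ordinal Hs) = (r == 1 :> nat) by [].
  have T1 : forall q (r : 'I_2), (r == 1 :> nat)%:R = (tab true true true i1 q r)%:R :> F.
    by move=> [[|[|[|?]]] ?] [[|[|?]] ?].
  rewrite (T1 p).
  rewrite E; apply: eq_bigr => i _; rewrite !mxE; apply: eq_bigr => k _; rewrite !mxE //.
Qed.
End Cover.

Section Graph.
Variables (m n : nat) (N : sum_network m n).
Local Notation V := (sn_V N).
Local Notation E := (sn_E N).
Local Notation tl := (@sn_tail m n N).
Local Notation hd := (@sn_head m n N).

Lemma adj_edge u v : sn_adj N u v -> exists e, tl e = u /\ hd e = v.
Proof. by move=> /existsP[e /andP[/eqP ? /eqP ?]]; exists e. Qed.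

Lemma edge_adj e : sn_adj N (tl e) (hd e).
Proof. by apply/existsP; exists e; rewrite !eqxx. Qed.

Lemma path_last x y : connect (sn_adj N) x y -> x != y ->
  exists e, hd e = y /\ connect (sn_adj N) x (tl e).
Proof.
move=> /connectP[p Hp ->]; elim/last_ind: p Hp => [|p z _]; first by rewrite eqxx.
rewrite rcons_path last_rcons => /andP[Hp /adj_edge[e [Ht Hh]]] _.
by exists e; split => //; rewrite Ht; apply/connectP; exists p.
Qed.

Lemma path_first x y : connect (sn_adj N) x y -> x != y ->
  exists e, tl e = x /\ connect (sn_adj N) (hd e) y.
Proof.
move=> /connectP[[|z p] /= Hp ->]; first by rewrite eqxx.
case/andP: Hp => /adj_edge[e [Ht Hh]] Hp _.
by exists e; split => //; rewrite Hh; apply/connectP; exists p.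
Qed.

Lemma connect_src x i : connect (sn_adj N) x (sn_src N i) -> x = sn_src N i.
Proof.
move=> H; case: (eqVneq x (sn_src N i)) => // /(path_last H)[e [He _]].
by move: (sn_src_noin e i); rewrite He eqxx.
Qed.

Lemma connect_term j y : connect (sn_adj N) (sn_term N j) y -> y = sn_term N j.
Proof.
move=> H; case: (eqVneq (sn_term N j) y) => // /(path_first H)[e [He _]].
by move: (sn_term_noout e j); rewrite He eqxx.
Qed.

Lemma src_not_term i j : (1 < m)%N ->
  (forall (i : 'I_m) (j : 'I_n), connect (sn_adj N) (sn_src N i) (sn_term N j)) ->
  sn_src N i != sn_term N j.
Proof.
move=> m2 Hc; apply/eqP => E.
have Hi : ((val i == 0%N) < m)%N by case: (val i == 0%N) => //; apply: leq_trans m2.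
pose i' := Ordinal Hi.
have ne : i' != i by apply/eqP => /(congr1 val) /=; case: (val i) => [|k] //=.
have := Hc i' j; rewrite -E => /connect_src /sn_src_inj /eqP; by rewrite (negbTE ne).
Qed.

Definition mu (e : E) := #|[set u | connect (sn_adj N) u (tl e)]|.

Lemma mu_lt e e' : hd e' = tl e -> (mu e' < mu e)%N.
Proof.
move=> He; apply: proper_card; apply/properP; split.
  apply/subsetP => u; rewrite !inE => Hu; apply: connect_trans Hu _.
  by rewrite -He; apply: connect1; exact: edge_adj.
exists (tl e); rewrite !inE ?connect0 //.
by rewrite -He; apply: (sn_acyclic e').
Qed.
End Graph.

Section Forward.
Variables (F : fieldType) (n : nat) (N : sum_network 3 n).
Hypothesis Hc : forall (i : 'I_3) (j : 'I_n), connect (sn_adj N) (sn_src N i) (sn_term N j).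
Local Notation V := (sn_V N).
Local Notation E := (sn_E N).
Local Notation tl := (@sn_tail 3 n N).
Local Notation hd := (@sn_head 3 n N).

Definition Sf (v : V) : {set 'I_3} := [set i | connect (sn_adj N) (sn_src N i) v].

Lemma Sf_src i : Sf (sn_src N i) = [set i].
Proof.
apply/setP => i'; rewrite !inE; apply/idP/eqP => [/connect_src/sn_src_inj // | ->].
exact: connect0.
Qed.

Lemma Sf_union v : (forall i, v != sn_src N i) ->
  Sf v = \bigcup_(e | hd e == v) Sf (tl e).
Proof.
move=> Hv; apply/setP => i; rewrite inE; apply/idP/bigcupP.
  move=> H; have Hv' : sn_src N i != v by rewrite eq_sym; exact: Hv i.
  have [e [He Hce]] := path_last H Hv'.
  by exists e; rewrite ?He ?eqxx // inE.
move=> [e /eqP He]; rewrite inE => H; apply: connect_trans H _.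
by rewrite -He; apply: connect1; exact: edge_adj.
Qed.

Lemma sum_G_single (i : 'I_3) : \sum_p G F [set i] p = G F [set i] i.
Proof.
rewrite (bigD1 i) //= big1 ?addr0 // => p pi; apply: G_out; by rewrite inE.
Qed.

Lemma sum_XG_single (X : 'I_3 -> 'rV[F]_2) (i : 'I_3) :
  \sum_p X p *m G F [set i] p = X i *m G F [set i] i.
Proof.
rewrite (bigD1 i) //= big1 ?addr0 // => p pi; rewrite G_out ?mulmx0 //; by rewrite inE.
Qed.

Lemma forward_solution : exists C : lin_code F N 2 3, is_solution C.
Proof.
have [Bf HB] := fin_all_exists (fun v : V => cover_mid F (fun e => hd e == v) (fun e => Sf (tl e))).
have HD : forall j : 'I_n, exists D : E -> 'M[F]_(3,2), forall p,
    \sum_(e | hd e == sn_term N j) G F (Sf (tl e)) p *m D e = 1%:M.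
  move=> j; apply: cover_dec; rewrite -Sf_union.
    by apply/setP => i; rewrite !inE Hc.
  by move=> i; rewrite eq_sym src_not_term.
have [Df HDf] := fin_all_exists HD.
exists (LinCode (fun e => \sum_p G F (Sf (tl e)) p) (fun e' e => Bf (tl e) e') Df).
move=> X y Hy.
have key : forall k e, (mu e < k)%N -> y e = \sum_p X p *m G F (Sf (tl e)) p.
  elim=> // k IH e Hk.
  case: (pickP (fun i => tl e == sn_src N i)) => [i /eqP Hi | Hns].
    rewrite ((Hy e).1 i Hi) /= Hi Sf_src sum_G_single.
    by rewrite sum_XG_single.
  have Hns' : forall i, tl e != sn_src N i by move=> i; rewrite Hns.
  rewrite ((Hy e).2 Hns') /=.
  rewrite (eq_bigr (fun e' => (\sum_p X p *m G F (Sf (tl e')) p) *m Bf (tl e) e')); last first.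
    move=> e' /eqP He'; rewrite (IH e') //.
    by apply: leq_trans (mu_lt He') _.
  rewrite (Sf_union Hns').
  under eq_bigr do rewrite mulmx_suml.
  rewrite exchange_big /=; apply: eq_bigr => p _.
  rewrite HB mulmx_sumr; apply: eq_bigr => e' _; by rewrite mulmxA.
move=> j; rewrite /terminal_output /=.
under eq_bigr => e _ do rewrite (key (mu e).+1 e (leqnn _)) mulmx_suml.
rewrite exchange_big /=; apply: eq_bigr => p _.
by rewrite -[RHS]mulmx1 -(HDf j p) mulmx_sumr; apply: eq_bigr => e' _; rewrite mulmxA.
Qed.
End Forward.

Section Dual.
Variables (F : fieldType) (m : nat) (N : sum_network m 3).
Hypothesis m2 : (1 < m)%N.
Hypothesis Hc : forall (i : 'I_m) (j : 'I_3), connect (sn_adj N) (sn_src N i) (sn_term N j).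
Local Notation V := (sn_V N).
Local Notation E := (sn_E N).
Local Notation tl := (@sn_tail m 3 N).
Local Notation hd := (@sn_head m 3 N).

Definition Tf (v : V) : {set 'I_3} := [set j | connect (sn_adj N) v (sn_term N j)].

Lemma Tf_term j : Tf (sn_term N j) = [set j].
Proof.
apply/setP => j'; rewrite !inE; apply/idP/eqP => [/connect_term/sn_term_inj // | ->].
exact: connect0.
Qed.

Lemma Tf_union v : (forall j, v != sn_term N j) ->
  Tf v = \bigcup_(e | tl e == v) Tf (hd e).
Proof.
move=> Hv; apply/setP => j; rewrite inE; apply/idP/bigcupP.
  move=> H; have [e [He Hce]] := path_first H (Hv j).
  by exists e; rewrite ?He ?eqxx // inE.
move=> [e /eqP He]; rewrite inE => H; apply: connect_trans _ H.
by rewrite -He; apply: connect1; exact: edge_adj.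
Qed.

Lemma dual_solution : exists C : lin_code F N 2 3, is_solution C.
Proof.
have [Bv HB] := fin_all_exists (fun v : V => cover_mid F (fun e => tl e == v) (fun e => Tf (hd e))).
have HD : forall v : V, exists D : E -> 'M[F]_(3,2),
    \bigcup_(e | tl e == v) Tf (hd e) = setT -> forall p,
    \sum_(e | tl e == v) G F (Tf (hd e)) p *m D e = 1%:M.
  move=> v; case: (eqVneq (\bigcup_(e | tl e == v) Tf (hd e)) setT) => [H|H].
    by have [D HD] := @cover_dec F _ _ _ H; exists D.
  by exists (fun _ => 0) => E; move: H; rewrite E eqxx.
have [Dv HDv] := fin_all_exists HD.
exists (LinCode (fun e => (Dv (tl e) e)^T) (fun e' e => (Bv (hd e') e)^T)
                (fun j e' => (G F (Tf (hd e')) j)^T)).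
move=> X y Hy j.
pose phi e := y e *m (G F (Tf (hd e)) j)^T.
pose inf v := \sum_(e | hd e == v) phi e.
pose outf v := \sum_(e | tl e == v) phi e.
have Hin : \sum_v inf v = \sum_e phi e.
  by rewrite (partition_big (@sn_head m 3 N) predT) //.
have Hout : \sum_v outf v = \sum_e phi e.
  by rewrite (partition_big (@sn_tail m 3 N) predT) //.
have key : forall v, inf v - outf v =
   (if v == sn_term N j then terminal_output
      (LinCode (fun e => (Dv (tl e) e)^T) (fun e' e => (Bv (hd e') e)^T)
                (fun j e' => (G F (Tf (hd e')) j)^T)) y j else 0)
   - \sum_i (if v == sn_src N i then X i else 0).
  move=> v.
  case: (pickP (fun i => v == sn_src N i)) => [i /eqP ? | Hns].
    subst v.
    rewrite /inf big1 => [|e /eqP He]; last by move: (sn_src_noin e i); rewrite He eqxx.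
    have -> : (sn_src N i == sn_term N j) = false by apply/negbTE; exact: src_not_term.
    rewrite (bigD1 i) //= eqxx big1 => [|i' /negbTE ne]; last first.
      by case: ifP => // /eqP /sn_src_inj E; move: ne; rewrite E eqxx.
    rewrite addr0 sub0r add0r; congr (- _).
    rewrite /outf.
    rewrite (eq_bigr (fun e => X i *m ((Dv (sn_src N i) e)^T *m (G F (Tf (hd e)) j)^T))); last first.
      move=> e /eqP He; rewrite /phi ((Hy e).1 i He) /= He mulmxA //.
    rewrite -mulmx_sumr -[RHS]mulmx1; congr (_ *m _).
    rewrite (eq_bigr (fun e => (G F (Tf (hd e)) j *m Dv (sn_src N i) e)^T)); last by move=> e _; rewrite trmx_mul.
    have Hun : \bigcup_(e | tl e == sn_src N i) Tf (hd e) = setT.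
      rewrite -Tf_union; first by apply/setP => j'; rewrite !inE Hc.
      by move=> j''; exact: src_not_term.
    by rewrite -(@trmx1 F 2) -(HDv (sn_src N i) Hun j) raddf_sum.
  have Hns' : forall i, v != sn_src N i by move=> i; rewrite Hns.
  have -> : \sum_i (if v == sn_src N i then X i else 0) = 0.
    by rewrite big1 // => i _; rewrite (negbTE (Hns' i)).
  rewrite subr0.
  case: (pickP (fun j' => v == sn_term N j')) => [j' /eqP Hj | Hnt].
    rewrite /outf big1 ?subr0 => [|e /eqP He]; last by move: (sn_term_noout e j'); rewrite He Hj eqxx.
    case: (eqVneq j' j) => [Ej | nj].
      subst j'; rewrite Hj eqxx /inf /terminal_output /=.
      by apply: eq_bigr.
    have -> : (v == sn_term N j) = false.
      by rewrite Hj; apply/negbTE; apply: contra nj => /eqP /sn_term_inj ->.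
    rewrite /inf big1 // => e /eqP He; change (y e *m (G F (Tf (hd e)) j)^T = 0). rewrite He Hj Tf_term G_out ?trmx0 ?mulmx0 //.
    by rewrite inE eq_sym.
  have Hnt' : forall j', v != sn_term N j' by move=> j'; rewrite Hnt.
  rewrite (negbTE (Hnt' j)); apply/eqP; rewrite subr_eq0; apply/eqP.
  rewrite /outf /inf; symmetry.
  rewrite (eq_bigr (fun e => \sum_(e' | hd e' == v) y e' *m ((Bv v e)^T *m (G F (Tf (hd e)) j)^T))); last first.
    move=> e /eqP He.
    have Hn : forall i, tl e != sn_src N i by move=> i; rewrite He.
    rewrite /phi ((Hy e).2 Hn) /= He mulmx_suml; apply: eq_bigr => e' /eqP He'; by rewrite He' mulmxA.
  rewrite exchange_big /=; apply: eq_bigr => e' /eqP He'.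
  rewrite -mulmx_sumr /phi He'; congr (_ *m _).
  rewrite (Tf_union Hnt') HB raddf_sum /=; apply: eq_bigr => e _; by rewrite trmx_mul.
have := congr1 (fun x => x) (etrans (Hin) (esym Hout)).
move/eqP; rewrite -subr_eq0 -sumrB (eq_bigr _ (fun v _ => key v)) sumrB.
rewrite -big_mkcond big_pred1_eq exchange_big /=.
under eq_bigr => i _ do rewrite -big_mkcond big_pred1_eq.
by rewrite subr_eq0 => /eqP.
Qed.
End Dual.

Unset Implicit Arguments.
Set Strict Implicit.

Theorem mainTheorem4 (F : finFieldType) (m n : nat) (N : sum_network m n) :
  minn m n = 3%N ->
  (forall (i : 'I_m) (j : 'I_n), connect (sn_adj N) (sn_src N i) (sn_term N j)) ->
  @linear_capacity_ge F m n N (2%:R / 3%:R).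
Proof.
move=> Hmin Hc q Hq.
have [C HC] : exists C : lin_code F N 2 3, is_solution C.
  case: (leqP m n) => Hmn.
    have m3 : m = 3%N by move: Hmin; rewrite (minn_idPl Hmn).
    subst m; exact: forward_solution.
  have n3 : n = 3%N by move: Hmin; rewrite (minn_idPr (ltnW Hmn)).
  subst n; apply: dual_solution => //.
  by apply: leq_trans Hmn.
by exists 2%N, 3%N, C; split.
Qed.
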